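(* Let $F$ be a field of characteristic $p>0$ which is algebraic over a finite field and has no field extension of degree $p$. Let $k=p^l$ for some integer $l\ge0$, let $u$ be a positive integer, let $c_1,\dots,c_u\in F$ be distinct, and set $$f_{k,u}(X,Y)=Y^{p^k}-Y+\frac{1}{\prod_{i=1}^u(X-c_i)}.$$ Then for every $a\in F\setminus\{c_1,\dots,c_u\}$ there exists $b\in F$ with $f_{k,u}(a,b)=0$. *)

(* Defs.v *)
From HB Require Import structures.
From mathcomp Require Import all_boot all_order all_algebra all_field.
Set Implicit Arguments. Unset Strict Implicit. Unset Printing Implicit Defensive.
Import GRing.Theory.
Local Open Scope ring_scope.

(* F is algebraic over its prime subfield (equivalently, over a finite field):
   every element is a root of a nonzero polynomial whose coefficients lie in
   the prime subfield {n%:R | n : nat}. *)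
Definition algebraic_over_prime_field (F : fieldType) : Prop :=
  forall x : F, exists q : {poly F},
    [/\ q != 0, forall i : nat, exists m : nat, q`_i = m%:R & root q x].

Definition no_field_ext_of_degree (F : fieldType) (d : nat) : Prop :=
  forall L : fieldExtType F, \dim (fullv : {vspace L}) <> d.

Definition f_ku (F : fieldType) (p k u : nat) (c : 'I_u -> F) (a b : F) : F :=
  b ^+ (p ^ k) - b + (\prod_(i < u) (a - c i))^-1.

(* Main.v *)
Require Import Defs.
From HB Require Import structures.
From mathcomp Require Import all_boot all_order all_algebra all_field.
From Stdlib Require Import Classical.
Local Open Scope ring_scope.
Import GRing.Theory.
Set Implicit Arguments. Unset Strict Implicit. Unset Printing Implicit Defensive.


Lemma GD (F : fieldType) p (hc : p \in [pchar F]) j (x y : F) :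
  (x + y) ^+ (p ^ j) = x ^+ (p ^ j) + y ^+ (p ^ j).
Proof.
elim: j x y => [|j IH] x y; first by rewrite !expr1.
by rewrite expnSr !exprM IH -!(pFrobenius_autE hc) rmorphD.
Qed.

Lemma GM (F : fieldType) (n : nat) (x y : F) : (x * y) ^+ n = x ^+ n * y ^+ n.
Proof. by rewrite exprMn. Qed.

Lemma GN1 (F : fieldType) p (hc : p \in [pchar F]) j :
  (-1 : F) ^+ (p ^ j) = -1.
Proof.
elim: j => [|j IH]; first by rewrite expr1.
by rewrite expnSr exprM IH -(pFrobenius_autE hc) rmorphN1.
Qed.

Lemma Gnat (F : fieldType) p (hc : p \in [pchar F]) j m :
  (m%:R : F) ^+ (p ^ j) = m%:R.
Proof.
elim: j => [|j IH]; first by rewrite expr1.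
by rewrite expnSr exprM IH -(pFrobenius_autE hc) rmorph_nat.
Qed.

Lemma G0 (F : fieldType) p (hp : prime p) j : (0 : F) ^+ (p ^ j) = 0.
Proof. by rewrite expr0n expn_eq0 eqn0Ngt prime_gt0. Qed.

Definition cf (F : fieldType) n i : F := (-1) ^+ (n + i) * ('C(n, i))%:R.

Lemma cfS (F : fieldType) n i : cf F n.+1 i.+1 = cf F n i - cf F n i.+1.
Proof.
rewrite /cf binS natrD mulrDr !addnS !addSn !exprS !mulN1r opprK mulNr opprK.
by rewrite addrC.
Qed.

Lemma Gcf (F : fieldType) p (hc : p \in [pchar F]) j n i :
  cf F n i ^+ (p ^ j) = cf F n i.
Proof. by rewrite /cf exprMn Gnat // -exprM mulnC exprM GN1. Qed.

Lemma iterE_formula (F : fieldType) p (hp : prime p) (hc : p \in [pchar F]) j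
  (y : F) n :
  iter n (fun x : F => x ^+ (p ^ j) - x) y =
  \sum_(0 <= i < n.+1) y ^+ (p ^ (j * i)) * cf F n i.
Proof.
have Gs : forall (m : nat) (f : nat -> F),
  (\sum_(0 <= i < m) f i) ^+ (p ^ j) = \sum_(0 <= i < m) (f i) ^+ (p ^ j).
  by move=> m f; rewrite (big_morph (fun x : F => x ^+ (p ^ j)) (GD hc j) (G0 F hp j)).
elim: n => [|n IH].
  rewrite big_nat1 /= muln0 expn0 expr1 /cf bin0 addn0 expr0 mul1r mulr1 //.
rewrite iterS IH Gs.
under eq_bigr => i _ do rewrite GM Gcf // -exprM -expnD addnC -mulnS.
set T := fun i => y ^+ (p ^ (j * i)).
have h1 : \sum_(0 <= i < n.+1) T i * cf F n i =
    T 0%N * cf F n 0 + \sum_(0 <= i < n) T i.+1 * cf F n i.+1.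
  by rewrite big_nat_recl.
have h3 : \sum_(0 <= i < n.+1) T i.+1 * cf F n i.+1 =
    \sum_(0 <= i < n) T i.+1 * cf F n i.+1.
  by rewrite big_nat_recr //= /cf bin_small // mulr0 mulr0 addr0.
have h2 : \sum_(0 <= i < n.+2) T i * cf F n.+1 i =
    T 0%N * cf F n.+1 0 + (\sum_(0 <= i < n.+1) T i.+1 * cf F n i -
      \sum_(0 <= i < n.+1) T i.+1 * cf F n i.+1).
  rewrite big_nat_recl // -sumrB; congr (_ + _).
  by apply: eq_bigr => i _; rewrite cfS mulrBr.
rewrite h2 h3 h1.
have -> : cf F n.+1 0 = - cf F n 0.
  by rewrite /cf !addn0 exprS mulN1r !bin0 mulNr.
by rewrite mulrN opprD addrCA.
Qed.



Lemma N1p (F : fieldType) p (hp : prime p) (hc : p \in [pchar F]) :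
  (-1 : F) ^+ p = -1.
Proof.
have [p2|podd] := even_prime hp.
  subst p; rewrite expr2 mulN1r opprK.
  have h2 : (2%:R : F) = 0 by apply/eqP; rewrite -(dvdn_pcharf hc).
  by apply/eqP; rewrite -subr_eq0 opprK -[1 + 1]/(2%:R) h2.
by rewrite -signr_odd podd expr1.
Qed.

Lemma iterE_p (F : fieldType) p (hp : prime p) (hc : p \in [pchar F]) j (y : F) :
  iter p (fun x : F => x ^+ (p ^ j) - x) y = y ^+ (p ^ (j * p)) - y.
Proof.
rewrite iterE_formula // big_nat_recl //.
rewrite -[X in \sum_(0 <= i < X) _](prednK (prime_gt0 hp)) big_nat_recr //= prednK ?prime_gt0 //.
rewrite big1_seq; last first.
  move=> i /andP[_]; rewrite mem_index_iota => /andP[_ hi].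
  rewrite /cf; have : (p %| 'C(p, i.+1))%N by apply: prime_dvd_bin => //; rewrite /= -ltnS prednK ?prime_gt0 in hi.
  by rewrite (dvdn_pcharf hc) => /eqP ->; rewrite !mulr0.
rewrite add0r /cf muln0 expn0 expr1 addn0 bin0 mulr1 binn mulr1 N1p //.
by rewrite addnn -mul2n exprM sqrrN !expr1n mulr1 mulrN1 addrC.
Qed.

Lemma iter_surj (T : Type) (f : T -> T) n :
  (forall s, exists y, f y = s) -> forall s, exists y, iter n f y = s.
Proof.
move=> hf; elim: n => [|n IH] s; first by exists s.
have [z hz] := hf s; have [y hy] := IH z; exists y.
by rewrite iterSr; have [w hw] := IH z; rewrite -hz -hy -iterSr iterS.
Qed.


Lemma irr_factor (F : fieldType) n (P : {poly F}) :
  (size P <= n)%N -> (1 < size P)%N ->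
  exists q : {poly F}, [/\ irreducible_poly q, q \is monic & q %| P].
Proof.
elim: n P => [|n IH] P hs h1; first by move: hs h1; rewrite leqn0 => /eqP->.
have P0 : P != 0 by rewrite -size_poly_gt0 ltnW.
have [irrP|nirr] := classic (irreducible_poly P).
  have lc : lead_coef P != 0 by rewrite lead_coef_eq0.
  have eq : (lead_coef P)^-1 *: P %= P by apply: eqp_scale; rewrite invr_eq0.
  exists ((lead_coef P)^-1 *: P); split.
  - split; first by rewrite size_scale ?invr_eq0.
    move=> r hr hrd; rewrite (eqp_dvdr _ eq) in hrd.
    apply: eqp_trans (irrP.2 r hr hrd) _; by rewrite eqp_sym.
  - by rewrite monicE lead_coefZ mulVf.
  - by rewrite (eqp_dvdl _ eq).
have [r [hr1 hrd hne]] : exists r : {poly F}, [/\ size r != 1%N, r %| P & ~~ (r %= P)].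
  apply: NNPP => hn; apply: nirr; split => // r hr hrd.
  apply: NNPP => hne; apply: hn; exists r; split => //; exact/negP.
have r0 : r != 0 by apply: contra_neq P0 => r0; move: hrd; rewrite r0 dvd0p => /eqP.
have hlt : (size r < size P)%N.
  by rewrite ltn_neqAle (dvdp_leq P0 hrd) andbT (dvdp_size_eqp hrd).
have hr2 : (1 < size r)%N.
  by move: hr1 r0; rewrite -size_poly_gt0; case: (size r) => [|[|]].
have [q [iq mq dq]] := IH r (leq_trans hlt hs) hr2.
by exists q; split => //; apply: dvdp_trans dq hrd.
Qed.



Lemma sum_shift (R : comNzRingType) (z : R) (g : nat -> R) (s : seq nat) :
  \sum_(i <- s) (z + g i) = z *+ size s + \sum_(i <- s) g i.
Proof.
elim: s => [|a s IH]; first by rewrite !big_nil addr0.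
by rewrite !big_cons IH /= mulrS addrACA.
Qed.

Lemma natr_inj_lt (R : nzRingType) p (hc : p \in [pchar R]) i j :
  (i < p)%N -> (j < p)%N -> (i%:R : R) = j%:R -> i = j.
Proof.
wlog hij : i j / (i <= j)%N.
  move=> W hi hj h; case: (leqP i j) => hij; first exact: W.
  by apply/esym/W => //; apply: ltnW.
move=> hi hj h; apply/eqP; rewrite eqn_leq hij /=.
apply: contraT; rewrite -ltnNge => hlt.
have : (p %| j - i)%N by rewrite (dvdn_pcharf hc) natrB // h subrr.
move/dvdn_leq; rewrite subn_gt0 => /(_ hlt).
by rewrite leqNgt (leq_ltn_trans (leq_subr _ _) hj).
Qed.

Lemma AS (F : fieldType) p (hp : prime p) (hc : p \in [pchar F])
  (hno : forall L : fieldExtType F, \dim (fullv : {vspace L}) <> p) (s : F) :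
  exists y : F, y ^+ p - y = s.
Proof.
apply: NNPP => hn.
have hy : forall y : F, y ^+ p - y - s != 0.
  by move=> y; apply/negP => /eqP h; apply: hn; exists y; apply/eqP; rewrite -subr_eq0 h.
have p1 : (1 < p)%N by apply: prime_gt1.
set P : {poly F} := 'X^p - ('X + s%:P).
have szP : size P = p.+1.
  by rewrite /P size_polyDl size_polyXn // size_polyN size_XaddC.
have mP : P \is monic.
  by rewrite monicE /P lead_coefDl ?lead_coefXn // size_polyXn size_polyN size_XaddC.
have hornP : forall y, P.[y] = y ^+ p - y - s.
  by move=> y; rewrite /P !hornerE opprD addrA.
have [q [iq mq dq]] := irr_factor (leqnn (size P)) (ltac:(by rewrite szP ltnS ltnW)).
have [L dimL [z rz _]] := irredp_FAdjoin iq.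
have hcL : p \in [pchar L] by apply: (rmorph_pchar (in_alg L)).
have PL : map_poly (in_alg L) P = 'X^p - ('X + ((in_alg L) s)%:P).
  by rewrite /P rmorphB rmorphD /= map_polyXn map_polyX map_polyC.
have zP : z ^+ p - z - (in_alg L) s = 0.
  have : root (map_poly (in_alg L) P) z by apply: root_dvdp rz; rewrite dvdp_map.
  by rewrite PL rootE !hornerE opprD addrA => /eqP.
pose r (i : nat) : L := z + i%:R.
have rootr : forall i, root (map_poly (in_alg L) P) (r i).
  move=> i; rewrite PL rootE !hornerE /r.
  rewrite -(pFrobenius_autE hcL) rmorphD /= rmorph_nat pFrobenius_autE.
  apply/eqP; rewrite -zP !opprD !addrA (addrAC _ (i%:R)) addrK.
  by [].
have ur : uniq_roots (map r (iota 0 p)).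
  rewrite uniq_rootsE map_inj_in_uniq ?iota_uniq // => i j.
  rewrite !mem_iota /= !add0n => hi hj /addrI h.
  exact: (natr_inj_lt hcL hi hj h).
have allr : all (root (map_poly (in_alg L) P)) (map r (iota 0 p)).
  by apply/allP => x /mapP[i _ ->].
have [w Pw] := uniq_roots_prod_XsubC allr ur.
have szPL : size (map_poly (in_alg L) P) = p.+1 by rewrite size_map_poly.
have w0 : w != 0 by apply: contra_eq_neq Pw => ->; rewrite mul0r -size_poly_eq0 szPL.
have w1 : size w == 1%N.
  move: szPL; rewrite Pw (size_mul w0 (monic_neq0 (monic_prod_XsubC _ _ _))).
  rewrite size_prod_XsubC size_map size_iota addnS /= => /eqP.
  by move=> /eqP h; rewrite -(eqn_add2r p) h add1n.
have [cw cw0 Ew] := size_poly1P _ w1; rewrite {}Ew in Pw.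
have dL : map_poly (in_alg L) q %| \prod_(i <- iota 0 p) ('X - (r i)%:P).
  rewrite (_ : \prod_(i <- iota 0 p) ('X - (r i)%:P) =
     \prod_(x <- map r (iota 0 p)) ('X - x%:P)); last by rewrite big_map.
  by rewrite -(eqp_dvdr _ (eqp_scale _ cw0)) -mul_polyC -Pw dvdp_map.
have [m hm] := dvdp_prod_XsubC dL.
move: hm; rewrite eqp_monic ?monic_map ?monic_prod_XsubC // => /eqP Eq.
set S := mask m (iota 0 p) in Eq.
have szq : size q = (size S).+1 by rewrite -(size_map_poly (in_alg L)) Eq size_prod_XsubC.
have dle : (size S <= p)%N.
  by rewrite -ltnS -szq -szP dvdp_leq // monic_neq0.
have dgt : (0 < size S)%N by rewrite -ltnS -szq (iq.1).
have [dlt|deq] := ltnP (size S) p; last first.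
  by apply: (hno L); rewrite dimL szq /=; apply/eqP; rewrite eqn_leq dle deq.
have d0 : (size S)%:R != 0 :> F.
  rewrite -(dvdn_pcharf hc); apply/negP => /(dvdn_leq dgt).
  by rewrite leqNgt dlt.
have Eq2 : map_poly (in_alg L) q = \prod_(x <- map r S) ('X - x%:P) by rewrite Eq big_map.
have cq := coefPn_prod_XsubC (ltac:(by rewrite size_map -lt0n) : size (map r S) != 0%N).
rewrite -Eq2 coef_map size_map big_map sum_shift /= in cq.
set x0 := - q`_(size S).-1 - \sum_(i <- S) (i%:R : F).
have hz : z *+ size S = (in_alg L) x0.
  rewrite /x0 rmorphB rmorphN rmorph_sum /=.
  rewrite cq opprK.
  under [X in _ = _ - X]eq_bigr => i _ do rewrite scaler_nat.
  by rewrite addrK.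
have zE : z = (in_alg L) (x0 / (size S)%:R).
  have dL0 : (in_alg L) (size S)%:R != 0 by rewrite fmorph_eq0.
  apply: (mulIf dL0); rewrite -rmorphM divfK // rmorph_nat mulr_natr hz //.
move/eqP: (hy (x0 / (size S)%:R)); apply.
apply: (fmorph_inj (in_alg L)); rewrite rmorph0 -zP.
by rewrite [in RHS]zE !rmorphB rmorphXn.
Qed.

Unset Implicit Arguments. Set Strict Implicit.

Theorem lemma3p1 (F : fieldType) (p : nat)
  (hp : prime p) (hchar : p \in [pchar F])
  (halg : algebraic_over_prime_field F)
  (hnoext : no_field_ext_of_degree F p)
  (l u : nat) (hu : (0 < u)%N) (c : 'I_u -> F) (hc : injective c) :
  let k := (p ^ l)%N in
  forall a : F, (forall i : 'I_u, a != c i) ->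
  exists b : F, f_ku p k c a b = 0.
Proof.
move=> k a _.
have surj : forall l' (s : F), exists y : F, y ^+ (p ^ (p ^ l')) - y = s.
  elim=> [|l' IH] s.
    by rewrite expn0 expn1; apply: AS.
  have [y hy] := iter_surj p IH s.
  by exists y; rewrite -hy iterE_p // expnSr.
have [b hb] := surj l (- (\prod_(i < u) (a - c i))^-1).
by exists b; rewrite /f_ku /k hb addNr.
Qed.
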